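(* The classes of trajectories $D$ and $D_1$ coincide: every trajectory $\tilde{\mathbf r}_\lambda(t,a_0,\omega_0)$ with $\lambda>0$, $a_0>0$, $\omega_0\ne0$, $0<a_0^3\omega_0^2/(2\lambda)<2$, coincides for all $t\ge0$ with some trajectory $\tilde{\mathbf r}_{\lambda'}(t,1,\omega_0')$ with $\lambda'>0$, $\omega_0'\neq0$, $\omega_0'^2/(2\lambda')<2$ (and trivially $D_1\subset D$).
   Context: Fix $N\ge2$, masses $m_i>0$, $\gamma>0$. Planar configuration space $\mathfrak R=\{\mathbf r=(\mathbf r_1,\dots,\mathbf r_N)\in(\mathbb R^2)^N:\ \mathbf r_i\neq\mathbf r_j \text{ for } i\neq j\}$; $f(\mathbf r)=\sum_{i<j}\frac{\gamma m_im_j}{|\mathbf r_j-\mathbf r_i|}$, $g(\mathbf r)=\sum_i m_i|\mathbf r_i|^2$. Fix $\lambda_*>0$ and a global minimizer $\mathbf r_{\lambda_*}$ of $f+\lambda_*g$ on $\mathfrak R$; for every $\lambda>0$ put $\mathbf r_\lambda=(\lambda_*/\lambda)^{1/3}\mathbf r_{\lambda_*}$ (a global minimizer of $f+\lambda g$). Identify $\mathbb R^2$ with $\mathbb C$ and let $z_{j\lambda}\in\mathbb C$ correspond to $\mathbf r_{j\lambda}$. For $\lambda>0$, $a_0>0$, $\omega_0\ne0$ with $0<a_0^3\omega_0^2/(2\lambda)<2$, set $e=1-a_0^3\omega_0^2/(2\lambda)$ (so $|e|<1$), $p=a_0(1-e)$, $a(\varphi)=p/(1-e\cos\varphi)$,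 and let $\varphi(t)$ be defined by $a_0^2\omega_0\,t=\int_0^{\varphi(t)}\frac{p^2\,d\alpha}{(1-e\cos\alpha)^2}$. The trajectory $\tilde{\mathbf r}_\lambda(t,a_0,\omega_0)$, $t\ge0$, is the one whose $j$-th particle has complex position $Z_j(t)=z_{j\lambda}\,a(\varphi(t))\,e^{i\varphi(t)}$, $j=1,\dots,N$. $D$ is the class of all such trajectories with parameters satisfying $0<a_0^3\omega_0^2/(2\lambda)<2$, and $D_1\subset D$ the subclass with $a_0=1$ (condition $\omega_0^2/(2\lambda)<2$). *)

(* Defs.v *)
From Stdlib Require Import Reals List.
From Coquelicot Require Import Coquelicot.
Open Scope R_scope.

Definition sumN (n : nat) (F : nat -> R) : R :=
  fold_right Rplus 0 (map F (seq 0 n)).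

(* A planar N-body configuration: particle i (0 <= i < N) has position r i,
   a point of R^2 identified with C. Values at indices >= N are irrelevant. *)
Definition config := nat -> C.

Definition in_config_space (N : nat) (r : config) : Prop :=
  forall i j, (i < N)%nat -> (j < N)%nat -> i <> j -> r i <> r j.

Definition fpot (N : nat) (m : nat -> R) (gam : R) (r : config) : R :=
  sumN N (fun j => sumN j (fun i => gam * m i * m j / Cmod (Cminus (r j) (r i)))).

Definition gmom (N : nat) (m : nat -> R) (r : config) : R :=
  sumN N (fun i => m i * (Cmod (r i)) ^ 2).

Definition global_minimizer (N : nat) (m : nat -> R) (gam lam : R) (r : config) : Prop :=
  in_config_space N r /\
  forall r', in_config_space N r' ->
    fpot N m gam r + lam * gmom N m r <= fpot N m gam r' + lam * gmom N m r'.

Definition r_scaled (lamS : R) (rS : config) (lam : R) : config :=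
  fun j => Cmult (RtoC (Rpower (lamS / lam) (1 / 3))) (rS j).

Definition ecc (lam a0 w0 : R) : R := 1 - a0 ^ 3 * w0 ^ 2 / (2 * lam).
Definition pparam (lam a0 w0 : R) : R := a0 * (1 - ecc lam a0 w0).
Definition arad (lam a0 w0 phi : R) : R :=
  pparam lam a0 w0 / (1 - ecc lam a0 w0 * cos phi).

(* phi is the angle function: for t >= 0,
   a0^2 w0 t = int_0^{phi t} p^2 / (1 - e cos alpha)^2 d alpha
   (oriented Riemann integral; phi t < 0 when w0 < 0). The right-hand side is
   strictly increasing in phi t and onto R, so phi is uniquely determined on t >= 0. *)
Definition phi_spec (lam a0 w0 : R) (phi : R -> R) : Prop :=
  forall t, 0 <= t ->
    a0 ^ 2 * w0 * t =
    RInt (fun al => (pparam lam a0 w0) ^ 2 / (1 - ecc lam a0 w0 * cos al) ^ 2) 0 (phi t).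

(* Complex position of particle j at time t on the trajectory
   tilde r_lambda(t, a0, w0): Z_j(t) = z_{j lambda} a(phi t) e^{i phi t}. *)
Definition traj (lamS : R) (rS : config) (lam a0 w0 : R) (phi : R -> R)
  (t : R) (j : nat) : C :=
  Cmult (r_scaled lamS rS lam j)
        (Cmult (RtoC (arad lam a0 w0 (phi t))) (cos (phi t), sin (phi t))).

(* Main.v *)
Require Import Defs.
From Stdlib Require Import Reals List Lra Psatz.
From Coquelicot Require Import Coquelicot.
Open Scope R_scope.

Lemma ecc_scale lam a0 w0 : 0 < lam -> 0 < a0 ->
  ecc (lam / a0 ^ 3) 1 w0 = ecc lam a0 w0.
Proof. intros. unfold ecc. field. split; nra. Qed.

Lemma pparam_scale lam a0 w0 : 0 < lam -> 0 < a0 ->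
  pparam lam a0 w0 = a0 * pparam (lam / a0 ^ 3) 1 w0.
Proof. intros. unfold pparam. rewrite ecc_scale by auto. ring. Qed.

Lemma denom_pos e x : -1 < e < 1 -> 0 < 1 - e * cos x.
Proof. intros. pose proof (COS_bound x). destruct (Rle_dec 0 e); nra. Qed.

Theorem theorem8p1
  (N : nat) (m : nat -> R) (gam lamS : R) (rS : config)
  (HN : (2 <= N)%nat)
  (Hm : forall i, (i < N)%nat -> 0 < m i)
  (Hgam : 0 < gam)
  (HlamS : 0 < lamS)
  (Hmin : global_minimizer N m gam lamS rS) :
  forall (lam a0 w0 : R) (phi : R -> R),
    0 < lam -> 0 < a0 -> w0 <> 0 ->
    0 < a0 ^ 3 * w0 ^ 2 / (2 * lam) < 2 ->
    phi_spec lam a0 w0 phi ->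
    exists (lam' w0' : R) (phi' : R -> R),
      0 < lam' /\ w0' <> 0 /\ w0' ^ 2 / (2 * lam') < 2 /\
      phi_spec lam' 1 w0' phi' /\
      forall t, 0 <= t -> forall j, (j < N)%nat ->
        traj lamS rS lam a0 w0 phi t j = traj lamS rS lam' 1 w0' phi' t j.
Proof.
  intros lam a0 w0 phi Hl Ha Hw Hs Hphi.
  assert (Ha3 : 0 < a0 ^ 3) by (apply pow_lt; auto).
  assert (He : -1 < ecc lam a0 w0 < 1) by (unfold ecc; lra).
  exists (lam / a0 ^ 3), w0, phi.
  split; [apply Rdiv_lt_0_compat; auto|].
  split; [auto|].
  split.
  { replace (w0 ^ 2 / (2 * (lam / a0 ^ 3))) with (a0 ^ 3 * w0 ^ 2 / (2 * lam))
      by (field; split; lra). lra. }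
  split.
  { intros t Ht. specialize (Hphi t Ht).
    set (g := fun al => pparam (lam / a0 ^ 3) 1 w0 ^ 2 /
                        (1 - ecc (lam / a0 ^ 3) 1 w0 * cos al) ^ 2).
    assert (Hex : ex_RInt g 0 (phi t)).
    { apply (@ex_RInt_continuous R_CompleteNormedModule). intros z _. apply continuity_pt_filterlim. apply derivable_continuous_pt. apply ex_derive_Reals_0.
      unfold g. rewrite ecc_scale by auto.
      pose proof (denom_pos _ z He).
      auto_derive. nra. }
    assert (Hsc : RInt (fun al => a0 ^ 2 * g al) 0 (phi t) = a0 ^ 2 * RInt g 0 (phi t)).
    { exact (@RInt_scal R_CompleteNormedModule g 0 (phi t) (a0 ^ 2) Hex). }
    rewrite (RInt_ext _ (fun al => a0 ^ 2 * g al)) in Hphi.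
    2:{ intros x _. unfold g.
        rewrite (pparam_scale lam a0 w0) by auto. rewrite (ecc_scale lam a0 w0) by auto.
        match goal with |- ?a = ?b => change (@eq R a b) end. field. pose proof (denom_pos _ x He). nra. }
    rewrite Hsc in Hphi.
    fold g.
    assert (Ha2 : 0 < a0 ^ 2) by (apply pow_lt; auto).
    apply (Rmult_eq_reg_l (a0 ^ 2)); [|lra].
    rewrite <- Hphi. ring. }
  intros t Ht j Hj.
  unfold traj, r_scaled, arad.
  rewrite (pparam_scale lam a0 w0) by auto. rewrite (ecc_scale lam a0 w0) by auto.
  replace (lamS / (lam / a0 ^ 3)) with ((lamS / lam) * a0 ^ 3)
    by (field; split; lra).
  rewrite <- Rpower_mult_distr by (auto; apply Rdiv_lt_0_compat; auto).
  replace (Rpower (a0 ^ 3) (1 / 3)) with a0.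
  2:{ rewrite <- (Rpower_pow 3 a0) by auto. rewrite Rpower_mult.
      replace (INR 3 * (1 / 3)) with 1 by (simpl; field).
      rewrite Rpower_1; auto. }
  pose proof (denom_pos _ (phi t) He). destruct (rS j) as [x y]. unfold Cmult, RtoC; simpl. f_equal; field; lra.
Qed.
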